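(* Let $H$ be a weak Hopf algebra, let $E_h=[h_1][S(h_2)]\in{H_{par}^w}$ for $h\in H$, and let ${A_{par}^w}$ be the subalgebra of ${H_{par}^w}$ generated by $\{E_h: h\in H\}$. Then the linear map $H\otimes{A_{par}^w}\to{A_{par}^w}$, $h\otimes a\mapsto h\cdot a=[h_1]\,a\,[S(h_2)]$, is well defined and makes ${A_{par}^w}$ a symmetric partial $H$-module algebra.
   Context: All algebras are associative and unital over a field $\Bbbk$; Sweedler notation $\Delta(h)=h_1\otimes h_2$. A weak Hopf algebra is $(H,m,u,\Delta,\varepsilon,S)$ with $H$ an algebra, $(H,\Delta,\varepsilon)$ a coalgebra, and for all $g,h,k$: $\Delta(kh)=\Delta(k)\Delta(h)$; $\varepsilon(kh_1)\varepsilon(h_2g)=\varepsilon(khg)=\varepsilon(kh_2)\varepsilon(h_1g)$; $(1\otimes\Delta(1))(\Delta(1)\otimes1)=\Delta^2(1)=(\Delta(1)\otimes1)(1\otimes\Delta(1))$; $h_1S(h_2)=\varepsilon(1_1h)1_2$; $S(h_1)h_2=1_1\varepsilon(h1_2)$; $S(h)=S(h_1)h_2S(h_3)$, where $\Delta(1)=1_1\otimes1_2$. ${H_{par}^w}=T(H)/I$, where $T(H)$ is the tensor algebra of the vector space $H$ and $I$ is the ideal generated by, for all $h,k\in H$: $1_H-1_{T(H)}$; $h\otimes k_1\otimes S(k_2)-hk_1\otimes S(k_2)$; $h\otimes S(k_1)\otimes k_2-hS(k_1)\otimes k_2$; $h_1\otimes S(h_2)\otimes k-h_1\otimes S(h_2)k$;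 $S(h_1)\otimes h_2\otimes k-S(h_1)\otimes h_2k$; $h-h_1\otimes S(h_2)\otimes h_3$; $[h]$ denotes the class of $h$. A symmetric partial $H$-module algebra is an algebra $A$ with a linear map $h\otimes a\mapsto h\cdot a$ such that for all $h,k\in H$, $a,b\in A$: $h\cdot(ab)=(h_1\cdot a)(h_2\cdot b)$; $1_H\cdot a=a$; $h\cdot(k\cdot a)=(h_1\cdot1_A)((h_2k)\cdot a)$; $h\cdot(k\cdot a)=((h_1k)\cdot a)(h_2\cdot1_A)$. *)

(* Defs.v *)
From HB Require Import structures.
From mathcomp Require Import all_boot all_order all_algebra.
Set Implicit Arguments. Unset Strict Implicit. Unset Printing Implicit Defensive.
Import GRing.Theory.
Local Open Scope ring_scope.

(* Tensors in H (x) H (resp. H (x) H (x) H) are represented by finite lists of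
   pairs (triples) of simple tensors; two such lists represent the same tensor
   iff every bilinear (trilinear) map into every K-vector space takes the same
   value on them (universal property of the tensor product). *)
Section Tensors.
Variables (K : fieldType) (H : lmodType K).

Definition bilinear_map (V : lmodType K) (f : H -> H -> V) :=
  (forall y a x1 x2, f (a *: x1 + x2) y = a *: f x1 y + f x2 y) /\
  (forall x a y1 y2, f x (a *: y1 + y2) = a *: f x y1 + f x y2).

Definition trilinear_map (V : lmodType K) (f : H -> H -> H -> V) :=
  (forall y z a x1 x2, f (a *: x1 + x2) y z = a *: f x1 y z + f x2 y z) /\
  (forall x z a y1 y2, f x (a *: y1 + y2) z = a *: f x y1 z + f x y2 z) /\
  (forall x y a z1 z2, f x y (a *: z1 + z2) = a *: f x y z1 + f x y z2).

Definition teq2 (s t : seq (H * H)) : Prop :=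
  forall (V : lmodType K) (f : H -> H -> V), bilinear_map f ->
    \sum_(p <- s) f p.1 p.2 = \sum_(p <- t) f p.1 p.2.

Definition teq3 (s t : seq (H * H * H)) : Prop :=
  forall (V : lmodType K) (f : H -> H -> H -> V), trilinear_map f ->
    \sum_(p <- s) f p.1.1 p.1.2 p.2 = \sum_(p <- t) f p.1.1 p.1.2 p.2.

End Tensors.

Section WeakHopf.
Variables (K : fieldType) (H : algType K).

Definition cop2 (cop : H -> seq (H * H)) (h : H) : seq (H * H * H) :=
  flatten [seq [seq (q.1, q.2, p.2) | q <- cop p.1] | p <- cop h].

(* (Delta, eps, S) make the algebra H a weak Hopf algebra.
   Delta(h) = \sum_(p <- cop h) p.1 (x) p.2  (Sweedler: h_1 (x) h_2). *)
Definition is_weak_hopf (cop : H -> seq (H * H)) (eps : H -> K) (S : H -> H)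
  : Prop :=
  (forall a h k, teq2 (cop (a *: h + k))
                   ([seq (a *: p.1, p.2) | p <- cop h] ++ cop k)) /\
  (forall a h k, eps (a *: h + k) = a * eps h + eps k) /\
  (forall a h k, S (a *: h + k) = a *: S h + S k) /\
  (forall h, teq3 (cop2 cop h)
     (flatten [seq [seq (p.1, q.1, q.2) | q <- cop p.2] | p <- cop h])) /\
  (forall h, \sum_(p <- cop h) eps p.1 *: p.2 = h) /\
  (forall h, \sum_(p <- cop h) eps p.2 *: p.1 = h) /\
  (forall k h, teq2 (cop (k * h))
     (flatten [seq [seq (p.1 * q.1, p.2 * q.2) | q <- cop h] | p <- cop k])) /\
  (forall k h g,
     \sum_(p <- cop h) eps (k * p.1) * eps (p.2 * g) = eps (k * h * g)) /\
  (forall k h g,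
     eps (k * h * g) = \sum_(p <- cop h) eps (k * p.2) * eps (p.1 * g)) /\
  teq3 (flatten [seq [seq (q.1, p.1 * q.2, p.2) | q <- cop 1] | p <- cop 1])
       (cop2 cop 1) /\
  teq3 (cop2 cop 1)
       (flatten [seq [seq (q.1, q.2 * p.1, p.2) | p <- cop 1] | q <- cop 1]) /\
  (forall h, \sum_(p <- cop h) p.1 * S p.2
             = \sum_(q <- cop 1) eps (q.1 * h) *: q.2) /\
  (forall h, \sum_(p <- cop h) S p.1 * p.2
             = \sum_(q <- cop 1) eps (h * q.2) *: q.1) /\
  (forall h, S h = \sum_(p <- cop2 cop h) S p.1.1 * p.1.2 * S p.2).

(* The relations generating the ideal I, for a linear map pi : H -> C into
   an algebra C (pi(h) plays the role of the class [h]). *)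
Definition par_rep (cop : H -> seq (H * H)) (S : H -> H)
  (C : algType K) (pi : H -> C) : Prop :=
  (forall a h k, pi (a *: h + k) = a *: pi h + pi k) /\
  pi 1 = 1 /\
  (forall h k, \sum_(p <- cop k) pi h * pi p.1 * pi (S p.2)
               = \sum_(p <- cop k) pi (h * p.1) * pi (S p.2)) /\
  (forall h k, \sum_(p <- cop k) pi h * pi (S p.1) * pi p.2
               = \sum_(p <- cop k) pi (h * S p.1) * pi p.2) /\
  (forall h k, \sum_(p <- cop h) pi p.1 * pi (S p.2) * pi k
               = \sum_(p <- cop h) pi p.1 * pi (S p.2 * k)) /\
  (forall h k, \sum_(p <- cop h) pi (S p.1) * pi p.2 * pi k
               = \sum_(p <- cop h) pi (S p.1) * pi (p.2 * k)) /\
  (forall h, pi h = \sum_(p <- cop2 cop h) pi p.1.1 * pi (S p.1.2) * pi p.2).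

Definition is_alg_hom (B C : algType K) (F : B -> C) : Prop :=
  (forall a x y, F (a *: x + y) = a *: F x + F y) /\
  (forall x y, F (x * y) = F x * F y) /\ F 1 = 1.

(* (B, pi) is H_par^w = T(H)/I with pi h = [h]: characterised (up to unique
   isomorphism) by the universal property of T(H)/I. *)
Definition is_Hpar (cop : H -> seq (H * H)) (S : H -> H)
  (B : algType K) (pi : H -> B) : Prop :=
  par_rep cop S pi /\
  forall (C : algType K) (phi : H -> C), par_rep cop S phi ->
    (exists F : B -> C, is_alg_hom F /\ forall h, F (pi h) = phi h) /\
    (forall F G : B -> C, is_alg_hom F -> is_alg_hom G ->
       (forall h, F (pi h) = phi h) -> (forall h, G (pi h) = phi h) ->
       forall x, F x = G x).

Definition Epar (cop : H -> seq (H * H)) (S : H -> H) (B : algType K)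
  (pi : H -> B) (h : H) : B :=
  \sum_(p <- cop h) pi p.1 * pi (S p.2).

Definition is_subalg_pred (B : algType K) (P : B -> Prop) : Prop :=
  P 1 /\ (forall x y, P x -> P y -> P (x + y)) /\
  (forall a x, P x -> P (a *: x)) /\ (forall x y, P x -> P y -> P (x * y)).

Definition in_gen_subalg (B : algType K) (gen : H -> B) (x : B) : Prop :=
  forall P : B -> Prop, is_subalg_pred P -> (forall h, P (gen h)) -> P x.

Definition par_act (cop : H -> seq (H * H)) (S : H -> H) (B : algType K)
  (pi : H -> B) (h : H) (a : B) : B :=
  \sum_(p <- cop h) pi p.1 * a * pi (S p.2).

Definition sym_partial_module_subalg (cop : H -> seq (H * H))
  (B : algType K) (inA : B -> Prop) (act : H -> B -> B) : Prop :=
  (forall h a b, inA a -> inA b ->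
     act h (a * b) = \sum_(p <- cop h) act p.1 a * act p.2 b) /\
  (forall a, inA a -> act 1 a = a) /\
  (forall h k a, inA a ->
     act h (act k a) = \sum_(p <- cop h) act p.1 1 * act (p.2 * k) a) /\
  (forall h k a, inA a ->
     act h (act k a) = \sum_(p <- cop h) act (p.1 * k) a * act p.2 1).

End WeakHopf.

(* Main.v *)
Require Import Defs.
From HB Require Import structures.
From mathcomp Require Import all_boot all_order all_algebra.
Set Implicit Arguments. Unset Strict Implicit. Unset Printing Implicit Defensive.
Import GRing.Theory.
Local Open Scope ring_scope.

Section Lin.
Variable (K : fieldType).
Definition lin (V W : lmodType K) (f : V -> W) :=
  forall a x y, f (a *: x + y) = a *: f x + f y.

Section L.
Variables (V W : lmodType K).
Lemma lin0 (f : V -> W) : lin f -> f 0 = 0.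
Proof. move=> hf; have E := hf 1 0 0; rewrite !scale1r addr0 in E.
by apply: (@addrI _ (f 0)); rewrite addr0 -{1}E. Qed.
Lemma linD (f : V -> W) : lin f -> forall x y, f (x + y) = f x + f y.
Proof. by move=> hf x y; have := hf 1 x y; rewrite !scale1r. Qed.
Lemma linZ (f : V -> W) : lin f -> forall a x, f (a *: x) = a *: f x.
Proof. by move=> hf a x; have := hf a x 0; rewrite !addr0 (lin0 hf) addr0. Qed.
Lemma lin_sumE (f : V -> W) I (s : seq I) (F : I -> V) : lin f ->
  f (\sum_(i <- s) F i) = \sum_(i <- s) f (F i).
Proof. move=> hf; exact: (big_morph f (linD hf) (lin0 hf)). Qed.
Lemma lin_id : lin (fun x : V => x). Proof. by []. Qed.
Lemma lin_add (f g : V -> W) : lin f -> lin g -> lin (fun x => f x + g x).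
Proof. move=> hf hg a x y; rewrite hf hg scalerDr; by rewrite addrACA. Qed.
Lemma lin_scale (c : K) (f : V -> W) : lin f -> lin (fun x => c *: f x).
Proof. by move=> hf a x y; rewrite hf scalerDr !scalerA mulrC. Qed.
Lemma lin_sum I (s : seq I) (F : V -> I -> W) :
  (forall i, lin (fun x => F x i)) -> lin (fun x => \sum_(i <- s) F x i).
Proof.
move=> hF a x y; rewrite scaler_sumr -big_split /=; apply: eq_bigr => i _.
exact: hF.
Qed.
Lemma lin_comp (U : lmodType K) (f : U -> W) (g : V -> U) :
  lin f -> lin g -> lin (fun x => f (g x)).
Proof. by move=> hf hg a x y; rewrite hg hf. Qed.
End L.
Section LA.
Variables (V : lmodType K) (A : algType K).
Lemma lin_mull (c : A) (f : V -> A) : lin f -> lin (fun x => c * f x).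
Proof. by move=> hf a x y; rewrite hf mulrDr scalerAr. Qed.
Lemma lin_mulr (c : A) (f : V -> A) : lin f -> lin (fun x => f x * c).
Proof. by move=> hf a x y; rewrite hf mulrDl scalerAl. Qed.
End LA.
End Lin.

Section App.
Variable (K : fieldType).
Lemma lin_app1 (T U W V : lmodType K) (G : U -> W -> V) (y : W) (g : T -> U) :
  (forall y, lin (fun x => G x y)) -> lin g -> lin (fun x => G (g x) y).
Proof. by move=> hG hg; apply: (lin_comp (hG y) hg). Qed.
Lemma lin_app2 (T U W V : lmodType K) (G : U -> W -> V) (x : U) (g : T -> W) :
  (forall x, lin (G x)) -> lin g -> lin (fun y => G x (g y)).
Proof. by move=> hG hg; apply: (lin_comp (hG x) hg). Qed.
End App.


Section WH.
Variables (K : fieldType) (H : algType K) (cop : H -> seq (H * H))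
  (eps : H -> K) (S : H -> H).
Hypothesis WH : is_weak_hopf cop eps S.

Lemma S_lin : lin S.
Proof. by case: WH => _ [_ [h _]] a x y; rewrite h. Qed.

Lemma eps_lin a x y : eps (a *: x + y) = a * eps x + eps y.
Proof. by case: WH => _ [h _]; rewrite h. Qed.

Lemma lin_SC (V : lmodType K) (f : V -> H) : lin f -> lin (fun x => S (f x)).
Proof. move=> hf; exact: (lin_comp S_lin hf). Qed.

Lemma lin_epsC (V W : lmodType K) (v : W) (f : V -> H) : lin f ->
  lin (fun x => eps (f x) *: v).
Proof. by move=> hf a x y; rewrite hf eps_lin scalerDl scalerA. Qed.

Lemma lin_copP (V : lmodType K) (F : H * H -> V) :
  (forall y, lin (fun x => F (x, y))) -> (forall x, lin (fun y => F (x, y))) ->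
  lin (fun h => \sum_(p <- cop h) F p).
Proof.
move=> h1 h2 a h k.
case: WH => hc _.
have E : forall s, \sum_(p <- s) F p = \sum_(p <- s) (fun x y => F (x, y)) p.1 p.2.
  by move=> s; apply: eq_bigr => -[].
rewrite !E (hc a h k V (fun x y => F (x, y))); last first.
  by split=> [y b x1 x2|x b y1 y2]; [apply: h1|apply: h2].
rewrite big_cat big_map /= scaler_sumr; congr (_ + _).
by apply: eq_bigr => p _; rewrite (linZ (h1 _)).
Qed.

Lemma coassoc (V : lmodType K) (F : H -> H -> H -> V) :
  (forall y z, lin (fun x => F x y z)) -> (forall x z, lin (fun y => F x y z)) ->
  (forall x y, lin (fun z => F x y z)) -> forall h,
  \sum_(p <- cop h) \sum_(q <- cop p.1) F q.1 q.2 p.2 =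
  \sum_(p <- cop h) \sum_(q <- cop p.2) F p.1 q.1 q.2.
Proof.
move=> h1 h2 h3 h.
case: WH => _ [_ [_ [hc _]]].
have := hc h V F; rewrite /cop2 !big_flatten /=.
rewrite !big_map.
under eq_bigr do rewrite big_map.
under [in RHS]eq_bigr do rewrite big_map.
apply.
split; [|split] => *; [apply: h1|apply: h2|apply: h3].
Qed.

Lemma mulcop (V : lmodType K) (F : H * H -> V) :
  (forall y, lin (fun x => F (x, y))) -> (forall x, lin (fun y => F (x, y))) ->
  forall k h, \sum_(p <- cop (k * h)) F p =
  \sum_(p <- cop k) \sum_(q <- cop h) F (p.1 * q.1, p.2 * q.2).
Proof.
move=> h1 h2 k h.
case: WH => _ [_ [_ [_ [_ [_ [hc _]]]]]].
have E : forall s, \sum_(p <- s) F p = \sum_(p <- s) (fun x y => F (x, y)) p.1 p.2.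
  by move=> s; apply: eq_bigr => -[].
rewrite E (hc k h V (fun x y => F (x, y))); last first.
  by split=> [y b x1 x2|x b y1 y2]; [apply: h1|apply: h2].
rewrite big_flatten big_map /=; apply: eq_bigr => p _; by rewrite big_map.
Qed.


Lemma cnt_l h : \sum_(p <- cop h) eps p.1 *: p.2 = h.
Proof. by case: WH => _ [_ [_ [_ [h5 _]]]]. Qed.
Lemma cnt_r h : \sum_(p <- cop h) eps p.2 *: p.1 = h.
Proof. by case: WH => _ [_ [_ [_ [_ [h6 _]]]]]. Qed.
Lemma wc1 k h g : \sum_(p <- cop h) eps (k * p.1) * eps (p.2 * g) = eps (k * h * g).
Proof. by case: WH => _ [_ [_ [_ [_ [_ [_ [h8 _]]]]]]]. Qed.
Lemma wc2 k h g : eps (k * h * g) = \sum_(p <- cop h) eps (k * p.2) * eps (p.1 * g).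
Proof. by case: WH => _ [_ [_ [_ [_ [_ [_ [_ [h9 _]]]]]]]]. Qed.
Definition et y := \sum_(q <- cop 1) eps (q.1 * y) *: q.2.
Definition es y := \sum_(q <- cop 1) eps (y * q.2) *: q.1.
Lemma At h : \sum_(p <- cop h) p.1 * S p.2 = et h.
Proof. by case: WH => _ [_ [_ [_ [_ [_ [_ [_ [_ [_ [_ [h12 _]]]]]]]]]]]. Qed.
Lemma As h : \sum_(p <- cop h) S p.1 * p.2 = es h.
Proof. by case: WH => _ [_ [_ [_ [_ [_ [_ [_ [_ [_ [_ [_ [h13 _]]]]]]]]]]]]. Qed.
Lemma Sax h : S h = \sum_(p <- cop h) \sum_(q <- cop p.1) S q.1 * q.2 * S p.2.
Proof.
case: WH => _ [_ [_ [_ [_ [_ [_ [_ [_ [_ [_ [_ [_ h14]]]]]]]]]]]].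
rewrite h14 /cop2 big_flatten big_map; apply: eq_bigr => p _; by rewrite big_map.
Qed.
Lemma D1a (V : lmodType K) (F : H -> H -> H -> V) :
  (forall y z, lin (fun x => F x y z)) -> (forall x z, lin (fun y => F x y z)) ->
  (forall x y, lin (fun z => F x y z)) ->
  \sum_(p <- cop 1) \sum_(q <- cop 1) F q.1 (p.1 * q.2) p.2 =
  \sum_(p <- cop 1) \sum_(q <- cop p.1) F q.1 q.2 p.2.
Proof.
move=> h1 h2 h3.
case: WH => _ [_ [_ [_ [_ [_ [_ [_ [_ [h10 _]]]]]]]]].
have := h10 V F; rewrite /cop2 !big_flatten /= !big_map.
under eq_bigr do rewrite big_map.
under [in RHS]eq_bigr do rewrite big_map.
apply; split; [|split] => *; [apply: h1|apply: h2|apply: h3].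
Qed.
Lemma D1b (V : lmodType K) (F : H -> H -> H -> V) :
  (forall y z, lin (fun x => F x y z)) -> (forall x z, lin (fun y => F x y z)) ->
  (forall x y, lin (fun z => F x y z)) ->
  \sum_(p <- cop 1) \sum_(q <- cop p.1) F q.1 q.2 p.2 =
  \sum_(q <- cop 1) \sum_(p <- cop 1) F q.1 (q.2 * p.1) p.2.
Proof.
move=> h1 h2 h3.
case: WH => _ [_ [_ [_ [_ [_ [_ [_ [_ [_ [h11 _]]]]]]]]]].
have := h11 V F; rewrite /cop2 !big_flatten /= !big_map.
under eq_bigr do rewrite big_map.
under [in RHS]eq_bigr do rewrite big_map.
apply; split; [|split] => *; [apply: h1|apply: h2|apply: h3].
Qed.
Lemma cntg_l (V : lmodType K) (g : H -> V) h : lin g ->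
  \sum_(p <- cop h) eps p.1 *: g p.2 = g h.
Proof.
move=> hg; rewrite -{2}(cnt_l h) (lin_sumE _ _ hg); apply: eq_bigr => p _.
by rewrite (linZ hg).
Qed.
Lemma cntg_r (V : lmodType K) (g : H -> V) h : lin g ->
  \sum_(p <- cop h) eps p.2 *: g p.1 = g h.
Proof.
move=> hg; rewrite -{2}(cnt_r h) (lin_sumE _ _ hg); apply: eq_bigr => p _.
by rewrite (linZ hg).
Qed.

Ltac lin1 := first
  [ apply: lin_copP | apply: lin_sum | apply: lin_add | apply: lin_mull
  | apply: lin_mulr | apply: lin_scale | apply: lin_SC
  | apply: lin_epsC | apply: lin_id
  | match goal with hh : forall _, lin (fun _ => _) |- _ => apply: (lin_app1 _ hh) end
  | match goal with hh : forall _, lin _ |- _ => apply: (lin_app2 _ hh) end ].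
Ltac lint := repeat first [ match goal with |- forall _, _ => intro end | simpl; lin1 ].

Lemma mul1cop (V : lmodType K) (F : H * H -> V) :
  (forall y, lin (fun x => F (x, y))) -> (forall x, lin (fun y => F (x, y))) ->
  forall h, \sum_(p <- cop 1) \sum_(q <- cop h) F (p.1 * q.1, p.2 * q.2) =
  \sum_(p <- cop h) F p.
Proof. by move=> h1 h2 h; rewrite -mulcop // mul1r. Qed.
Lemma mulcop1 (V : lmodType K) (F : H * H -> V) :
  (forall y, lin (fun x => F (x, y))) -> (forall x, lin (fun y => F (x, y))) ->
  forall h, \sum_(p <- cop h) \sum_(q <- cop 1) F (p.1 * q.1, p.2 * q.2) =
  \sum_(p <- cop h) F p.
Proof. by move=> h1 h2 h; rewrite -mulcop // mulr1. Qed.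

End WH.


Section WH2.
Variables (K : fieldType) (H : algType K) (cop : H -> seq (H * H))
  (eps : H -> K) (S : H -> H).
Hypothesis WH : is_weak_hopf cop eps S.
Local Notation es := (@es _ _ cop eps).
Local Notation et := (@et _ _ cop eps).

Ltac lin1 := first
  [ apply: (lin_copP WH) | apply: lin_sum | apply: lin_add | apply: lin_mull
  | apply: lin_mulr | apply: lin_scale | apply: (lin_SC WH)
  | apply: (lin_epsC WH) | apply: lin_id
  | match goal with hh : forall _, lin (fun _ => _) |- _ => apply: (lin_app1 _ hh) end
  | match goal with hh : forall _, lin _ |- _ => apply: (lin_app2 _ hh) end ].
Ltac lint := repeat first [ match goal with |- forall _, _ => intro end | simpl; lin1 ].
Ltac side := try (solve [lint]).

Section G.
Variables (V : lmodType K) (G : H -> H -> V).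
Hypotheses (hG1 : forall y, lin (fun x => G x y)) (hG2 : forall x, lin (G x)).

Lemma Wp x : \sum_(p <- cop x) \sum_(q <- cop p.2) G p.1 (q.1 * S q.2) =
  \sum_(b <- cop 1) G (b.1 * x) b.2.
Proof.
transitivity (\sum_(p <- cop x) \sum_(b <- cop 1) eps (b.1 * p.2) *: G p.1 b.2).
  apply: eq_bigr => p _.
  rewrite -(lin_sumE _ _ (hG2 p.1)) (At WH) /et (lin_sumE _ _ (hG2 _)).
  by apply: eq_bigr => b _; rewrite (linZ (hG2 _)).
symmetry.
transitivity (\sum_(b <- cop 1) \sum_(c <- cop b.1)
   (fun u v w => \sum_(p <- cop x) eps (v * p.2) *: G (u * p.1) w) c.1 c.2 b.2).
  apply: eq_bigr => b _.
  rewrite -{1}(cnt_r WH (b.1 * x)) (lin_sumE _ _ (hG1 _)).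
  rewrite (mulcop WH (F:=fun r => G (eps r.2 *: r.1) b.2)); side.
  by apply: eq_bigr => c _; apply: eq_bigr => p _; rewrite (linZ (hG1 _)).
rewrite -(D1a WH (F:=fun u v w => \sum_(p <- cop x) eps (v * p.2) *: G (u * p.1) w)); side.
rewrite [RHS]exchange_big /=; apply: eq_bigr => b _.
under eq_bigr do under eq_bigr do rewrite -mulrA.
by rewrite (mul1cop WH (F:=fun r => eps (b.1 * r.2) *: G r.1 b.2)); side.
Qed.
End G.

Lemma W3 (V : lmodType K) (G : H -> H -> V) :
  (forall y, lin (fun x => G x y)) -> (forall x, lin (G x)) -> forall x,
  \sum_(p <- cop x) \sum_(q <- cop p.1) G (S q.1 * q.2) p.2 =
  \sum_(b <- cop 1) G b.1 (x * b.2).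
Proof.
move=> hG1 hG2 x.
transitivity (\sum_(p <- cop x) \sum_(a <- cop 1) eps (p.1 * a.2) *: G a.1 p.2).
  apply: eq_bigr => p _.
  rewrite -(lin_sumE _ _ (hG1 p.2)) (As WH) /es (lin_sumE _ _ (hG1 _)).
  by apply: eq_bigr => b _; rewrite (linZ (hG1 _)).
symmetry.
transitivity (\sum_(b <- cop 1) \sum_(c <- cop b.2)
   (fun u v w => \sum_(p <- cop x) eps (p.1 * v) *: G u (p.2 * w)) b.1 c.1 c.2).
  apply: eq_bigr => b _.
  rewrite -{1}(cnt_l WH (x * b.2)) (lin_sumE _ _ (hG2 _)).
  rewrite (mulcop WH (F:=fun r => G b.1 (eps r.1 *: r.2))); side.
  rewrite exchange_big /=.
  by apply: eq_bigr => c _; apply: eq_bigr => p _; rewrite (linZ (hG2 _)).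
rewrite -(coassoc WH (F:=fun u v w => \sum_(p <- cop x) eps (p.1 * v) *: G u (p.2 * w))); side.
rewrite -(D1a WH (F:=fun u v w => \sum_(p <- cop x) eps (p.1 * v) *: G u (p.2 * w))); side.
rewrite exchange_big [RHS]exchange_big /=; apply: eq_bigr => q _.
rewrite exchange_big /=.
under eq_bigr do under eq_bigr do rewrite mulrA.
by rewrite (mulcop1 WH (F:=fun r => eps (r.1 * q.2) *: G q.1 r.2)); side.
Qed.

Lemma W4 (V : lmodType K) (G : H -> H -> V) :
  (forall y, lin (fun x => G x y)) -> (forall x, lin (G x)) -> forall x,
  \sum_(p <- cop x) \sum_(b <- cop 1) eps (p.2 * b.1) *: G p.1 b.2 =
  \sum_(b <- cop 1) G (x * b.1) b.2.
Proof.
move=> hG1 hG2 x; symmetry.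
transitivity (\sum_(b <- cop 1) \sum_(c <- cop b.1)
   (fun u v w => \sum_(p <- cop x) eps (p.2 * v) *: G (p.1 * u) w) c.1 c.2 b.2).
  apply: eq_bigr => b _.
  rewrite -{1}(cnt_r WH (x * b.1)) (lin_sumE _ _ (hG1 _)).
  rewrite (mulcop WH (F:=fun r => G (eps r.2 *: r.1) b.2)); side.
  rewrite exchange_big /=.
  by apply: eq_bigr => c _; apply: eq_bigr => p _; rewrite (linZ (hG1 _)).
rewrite (D1b WH (F:=fun u v w => \sum_(p <- cop x) eps (p.2 * v) *: G (p.1 * u) w)); side.
rewrite exchange_big [RHS]exchange_big /=; apply: eq_bigr => b _.
rewrite exchange_big /=.
under eq_bigr do under eq_bigr do rewrite mulrA.
by rewrite (mulcop1 WH (F:=fun r => eps (r.2 * b.1) *: G r.1 b.2)); side.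
Qed.

Lemma eps0 : eps 0 = 0.
Proof. have E := eps_lin WH 1 0 0; rewrite scale1r addr0 mul1r in E.
by apply: (@addrI _ (eps 0)); rewrite addr0 -{1}E. Qed.
Lemma epsD x y : eps (x + y) = eps x + eps y.
Proof. by have := eps_lin WH 1 x y; rewrite scale1r mul1r. Qed.
Lemma epsZ a x : eps (a *: x) = a * eps x.
Proof. by have := eps_lin WH a x 0; rewrite addr0 eps0 addr0. Qed.
Lemma eps_sum I (s : seq I) (F : I -> H) :
  eps (\sum_(i <- s) F i) = \sum_(i <- s) eps (F i).
Proof. exact: (big_morph eps epsD eps0). Qed.

Lemma Wa (V : lmodType K) (G : H -> H -> V) :
  (forall y, lin (fun x => G x y)) -> (forall x, lin (G x)) -> forall x,
  \sum_(p <- cop x) G p.1 (es p.2) = \sum_(b <- cop 1) G (x * b.1) (es b.2).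
Proof.
move=> hG1 hG2 x.
transitivity (\sum_(a <- cop 1) \sum_(p <- cop x) \sum_(b <- cop 1)
   eps (p.2 * b.1) *: (eps (b.2 * a.2) *: G p.1 a.1)).
  rewrite exchange_big /=; apply: eq_bigr => p _.
  rewrite /es (lin_sumE _ _ (hG2 _)); apply: eq_bigr => a _.
  rewrite (linZ (hG2 _)).
  have -> : p.2 * a.2 = p.2 * 1 * a.2 by rewrite mulr1.
  rewrite -(wc1 WH) scaler_suml; apply: eq_bigr => b _; by rewrite scalerA.
transitivity (\sum_(a <- cop 1) \sum_(b <- cop 1) eps (b.2 * a.2) *: G (x * b.1) a.1).
  apply: eq_bigr => a _.
  by rewrite (W4 (G:=fun u v => eps (v * a.2) *: G u a.1)); side.
rewrite exchange_big /=; apply: eq_bigr => b _.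
rewrite /es (lin_sumE _ _ (hG2 _)); apply: eq_bigr => a _.
by rewrite (linZ (hG2 _)).
Qed.

Lemma C2 x y : et (x * et y) = et (x * y).
Proof.
rewrite /et; apply: eq_bigr => a _; congr (_ *: _).
rewrite !mulr_sumr eps_sum.
have -> : a.1 * (x * y) = a.1 * x * 1 * y by rewrite mulr1 mulrA.
rewrite (wc2 WH); apply: eq_bigr => b _.
by rewrite -!scalerAr epsZ mulrC !mulrA.
Qed.

Lemma C2' x y : es (es x * y) = es (x * y).
Proof.
rewrite /es; apply: eq_bigr => a _; congr (_ *: _).
rewrite !mulr_suml eps_sum.
have -> : x * y * a.2 = x * 1 * (y * a.2) by rewrite mulr1 mulrA.
rewrite (wc2 WH); apply: eq_bigr => b _.
by rewrite -scalerAl -scalerAl epsZ mulrA.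
Qed.

Lemma C1 (V : lmodType K) (G : H -> H -> V) :
  (forall y, lin (fun x => G x y)) -> (forall x, lin (G x)) -> forall y,
  \sum_(r <- cop (et y)) G r.1 r.2 = \sum_(c <- cop 1) G (c.1 * et y) c.2.
Proof.
move=> hG1 hG2 y.
have L : lin (fun h => \sum_(r <- cop h) G r.1 r.2) by lint.
rewrite {1}/et (lin_sumE _ _ L).
transitivity (\sum_(b <- cop 1) \sum_(r <- cop b.2)
   (fun u v w => eps (u * y) *: G v w) b.1 r.1 r.2).
  by apply: eq_bigr => b _; rewrite (linZ L) scaler_sumr.
rewrite -(coassoc WH (F:=fun u v w => eps (u * y) *: G v w)); side.
rewrite -(D1a WH (F:=fun u v w => eps (u * y) *: G v w)); side.
apply: eq_bigr => p _ /=.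
rewrite /et mulr_sumr (lin_sumE _ _ (hG1 _)); apply: eq_bigr => q _.
by rewrite -scalerAr (linZ (hG1 _)).
Qed.

Lemma C1' (V : lmodType K) (G : H -> H -> V) :
  (forall y, lin (fun x => G x y)) -> (forall x, lin (G x)) -> forall y,
  \sum_(r <- cop (es y)) G r.1 r.2 = \sum_(c <- cop 1) G c.1 (es y * c.2).
Proof.
move=> hG1 hG2 y.
have L : lin (fun h => \sum_(r <- cop h) G r.1 r.2) by lint.
rewrite {1}/es (lin_sumE _ _ L).
transitivity (\sum_(a <- cop 1) \sum_(r <- cop a.1)
   (fun u v w => eps (y * w) *: G u v) r.1 r.2 a.2).
  by apply: eq_bigr => b _; rewrite (linZ L) scaler_sumr.
rewrite -(D1a WH (F:=fun u v w => eps (y * w) *: G u v)); side.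
rewrite exchange_big /=; apply: eq_bigr => q _ /=.
rewrite /es mulr_suml (lin_sumE _ _ (hG2 _)); apply: eq_bigr => p _.
by rewrite -scalerAl (linZ (hG2 _)).
Qed.

Lemma C3 x y : et (x * et y) = \sum_(p <- cop x) p.1 * et y * S p.2.
Proof.
rewrite -[LHS](At WH) (mulcop WH (F:=fun r => r.1 * S r.2)); side.
rewrite exchange_big /=.
rewrite (C1 (G:=fun u v => \sum_(p <- cop x) p.1 * u * S (p.2 * v))); side.
rewrite exchange_big /=.
rewrite -[RHS](mulcop1 WH (F:=fun r => r.1 * et y * S r.2)); side.
by apply: eq_bigr => p _; apply: eq_bigr => c _ /=; rewrite !mulrA.
Qed.

Lemma MG x y : \sum_(p <- cop x) \sum_(q <- cop y) p.1 * q.1 * S q.2 * S p.2 =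
  \sum_(p <- cop x) \sum_(q <- cop y) p.1 * q.1 * S (p.2 * q.2).
Proof.
transitivity (\sum_(p <- cop x) p.1 * et y * S p.2).
  apply: eq_bigr => p _; rewrite -(At WH) mulr_sumr mulr_suml.
  by apply: eq_bigr => q _; rewrite !mulrA.
by rewrite -C3 C2 -(At WH) (mulcop WH (F:=fun r => r.1 * S r.2)); side.
Qed.

Lemma C3' x y : es (es x * y) = \sum_(q <- cop y) S q.1 * es x * q.2.
Proof.
rewrite -[LHS](As WH) (mulcop WH (F:=fun r => S r.1 * r.2)); side.
rewrite (C1' (G:=fun u v => \sum_(q <- cop y) S (u * q.1) * (v * q.2))); side.
rewrite -[RHS](mul1cop WH (F:=fun r => S r.1 * es x * r.2)); side.
by apply: eq_bigr => c _; apply: eq_bigr => q _ /=; rewrite !mulrA.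
Qed.

Lemma GM x y : \sum_(p <- cop x) \sum_(q <- cop y) S q.1 * S p.1 * p.2 * q.2 =
  \sum_(p <- cop x) \sum_(q <- cop y) S (p.1 * q.1) * (p.2 * q.2).
Proof.
transitivity (\sum_(q <- cop y) S q.1 * es x * q.2).
  rewrite exchange_big; apply: eq_bigr => q _.
  rewrite -(As WH) mulr_sumr mulr_suml; apply: eq_bigr => p _; by rewrite !mulrA.
by rewrite -C3' C2' -(As WH) (mulcop WH (F:=fun r => S r.1 * r.2)); side.
Qed.

Lemma COMM x y : es x * et y = et y * es x.
Proof.
transitivity (\sum_(p <- cop 1) \sum_(q <- cop 1)
  (fun u v w => eps (u * y) *: (eps (x * w) *: v)) q.1 (p.1 * q.2) p.2).
  rewrite /es /et mulr_suml; apply: eq_bigr => p _; rewrite mulr_sumr.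
  apply: eq_bigr => q _ /=.
  by rewrite -scalerAl -scalerAr !scalerA [eps (x * _) * _]mulrC.
rewrite (D1a WH (F:=fun u v w => eps (u * y) *: (eps (x * w) *: v))); side.
rewrite (D1b WH (F:=fun u v w => eps (u * y) *: (eps (x * w) *: v))); side.
rewrite /es /et mulr_suml; apply: eq_bigr => q _; rewrite mulr_sumr.
by apply: eq_bigr => p _ /=; rewrite -scalerAl -scalerAr.
Qed.

Lemma mul_sum2 (R : pzRingType) I J (s : seq I) (t : seq J) (c d : R)
  (f : I -> R) (g : J -> R) :
  c * ((\sum_(i <- s) f i) * (\sum_(j <- t) g j)) * d =
  \sum_(i <- s) \sum_(j <- t) c * f i * g j * d.
Proof.
rewrite big_distrlr mulr_sumr mulr_suml; apply: eq_bigr => i _.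
rewrite mulr_sumr mulr_suml; apply: eq_bigr => j _; by rewrite !mulrA.
Qed.

Lemma AM x y : S (x * y) = S y * S x.
Proof.
have M : forall a b c, \sum_(s <- cop (a * b)) S s.1 * s.2 * c =
   \sum_(p' <- cop a) \sum_(q' <- cop b) S (p'.1 * q'.1) * (p'.2 * q'.2) * c.
  by move=> a b c; rewrite (mulcop WH (F:=fun s => S s.1 * s.2 * c)); side.
transitivity (\sum_(p <- cop x) \sum_(p' <- cop p.1) \sum_(q <- cop y)
   \sum_(q' <- cop q.1) S (p'.1 * q'.1) * (p'.2 * q'.2) * S (p.2 * q.2)).
  rewrite (Sax WH) (mulcop WH (F:=fun r => \sum_(s <- cop r.1) S s.1 * s.2 * S r.2)); side.
  apply: eq_bigr => p _ /=.
  under eq_bigr do rewrite M.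
  by rewrite exchange_big.
transitivity (\sum_(p <- cop x) \sum_(p' <- cop p.2) \sum_(q <- cop y)
   \sum_(q' <- cop q.2) S (p.1 * q.1) * (p'.1 * q'.1) * S (p'.2 * q'.2)).
  transitivity (\sum_(p <- cop x) \sum_(p' <- cop p.1) \sum_(q <- cop y)
   \sum_(q' <- cop q.2) S (p'.1 * q.1) * (p'.2 * q'.1) * S (p.2 * q'.2)).
    apply: eq_bigr => p _; apply: eq_bigr => p' _.
    by rewrite (coassoc WH (F:=fun a b c => S (p'.1 * a) * (p'.2 * b) * S (p.2 * c))); side.
  by rewrite (coassoc WH (F:=fun u v w => \sum_(q <- cop y) \sum_(q' <- cop q.2)
       S (u * q.1) * (v * q'.1) * S (w * q'.2))); side.
transitivity (\sum_(p <- cop x) \sum_(p' <- cop p.2) \sum_(q <- cop y)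
   \sum_(q' <- cop q.2) S (p.1 * q.1) * (p'.1 * q'.1) * S q'.2 * S p'.2).
  apply: eq_bigr => p _; rewrite exchange_big [RHS]exchange_big.
  apply: eq_bigr => q _.
  transitivity (S (p.1 * q.1) * \sum_(p' <- cop p.2) \sum_(q' <- cop q.2)
     p'.1 * q'.1 * S (p'.2 * q'.2)).
    rewrite mulr_sumr; apply: eq_bigr => p' _; rewrite mulr_sumr.
    by apply: eq_bigr => q' _; rewrite !mulrA.
  rewrite -MG mulr_sumr; apply: eq_bigr => p' _; rewrite mulr_sumr.
  by apply: eq_bigr => q' _; rewrite !mulrA.
transitivity (\sum_(p <- cop x) \sum_(p' <- cop p.1) \sum_(q <- cop y)
   \sum_(q' <- cop q.1) S (p'.1 * q'.1) * (p'.2 * q'.2) * S q.2 * S p.2).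
  transitivity (\sum_(p <- cop x) \sum_(p' <- cop p.1) \sum_(q <- cop y)
   \sum_(q' <- cop q.2) S (p'.1 * q.1) * (p'.2 * q'.1) * S q'.2 * S p.2).
    by rewrite -(coassoc WH (F:=fun u v w => \sum_(q <- cop y) \sum_(q' <- cop q.2)
       S (u * q.1) * (v * q'.1) * S q'.2 * S w)); side.
  apply: eq_bigr => p _; apply: eq_bigr => p' _.
  by rewrite (coassoc WH (F:=fun a b c => S (p'.1 * a) * (p'.2 * b) * S c * S p.2)); side.
transitivity (\sum_(p <- cop x) \sum_(p' <- cop p.1) \sum_(q <- cop y)
   \sum_(q' <- cop q.1) S q'.1 * S p'.1 * p'.2 * q'.2 * S q.2 * S p.2).
  apply: eq_bigr => p _; rewrite exchange_big [RHS]exchange_big.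
  apply: eq_bigr => q _.
  transitivity ((\sum_(p' <- cop p.1) \sum_(q' <- cop q.1)
     S (p'.1 * q'.1) * (p'.2 * q'.2)) * (S q.2 * S p.2)).
    rewrite mulr_suml; apply: eq_bigr => p' _; rewrite mulr_suml.
    by apply: eq_bigr => q' _; rewrite !mulrA.
  rewrite -GM mulr_suml; apply: eq_bigr => p' _; rewrite mulr_suml.
  by apply: eq_bigr => q' _; rewrite !mulrA.
transitivity (\sum_(p <- cop x) \sum_(q <- cop y) S q.1 * (es p.1 * et q.2) * S p.2).
  apply: eq_bigr => p _.
  transitivity (\sum_(p' <- cop p.1) \sum_(q <- cop y)
   \sum_(q' <- cop q.2) S q.1 * S p'.1 * p'.2 * q'.1 * S q'.2 * S p.2).
    apply: eq_bigr => p' _.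
    by rewrite (coassoc WH (F:=fun a b c => S a * S p'.1 * p'.2 * b * S c * S p.2)); side.
  rewrite exchange_big; apply: eq_bigr => q _.
  rewrite -(As WH) -(At WH) mul_sum2; apply: eq_bigr => p' _.
  by apply: eq_bigr => q' _; rewrite !mulrA.
have Sy : S y = \sum_(q <- cop y) S q.1 * et q.2.
  rewrite (Sax WH) (coassoc WH (F:=fun a b c => S a * b * S c)); side.
  apply: eq_bigr => q _; rewrite -(At WH) mulr_sumr.
  by apply: eq_bigr => q' _; rewrite !mulrA.
have Sx : S x = \sum_(p <- cop x) es p.1 * S p.2.
  rewrite (Sax WH); apply: eq_bigr => p _; by rewrite -(As WH) mulr_suml.
rewrite Sy Sx mulr_suml exchange_big; apply: eq_bigr => q _ /=.
rewrite mulr_sumr; apply: eq_bigr => p _; by rewrite COMM !mulrA.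
Qed.

Lemma Wb (V : lmodType K) (G : H -> H -> V) :
  (forall y, lin (fun x => G x y)) -> (forall x, lin (G x)) -> forall x,
  \sum_(b <- cop 1) G (x * b.1) (es b.2) = \sum_(b <- cop 1) G (x * b.1) (S b.2).
Proof.
move=> hG1 hG2 x.
transitivity (\sum_(b <- cop 1) \sum_(q <- cop b.2)
   (fun u v w => G (x * u) (S v * w)) b.1 q.1 q.2).
  by apply: eq_bigr => b _; rewrite -(As WH) (lin_sumE _ _ (hG2 _)).
rewrite -(coassoc WH (F:=fun u v w => G (x * u) (S v * w))); side.
rewrite -(D1a WH (F:=fun u v w => G (x * u) (S v * w))); side.
rewrite exchange_big; apply: eq_bigr => q _ /=.
transitivity (G (x * q.1) (S q.2 * \sum_(p <- cop 1) S p.1 * p.2)).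
  rewrite mulr_sumr (lin_sumE _ _ (hG2 _)).
  by apply: eq_bigr => p _; rewrite AM mulrA.
rewrite (As WH) /es.
under eq_bigr do rewrite mul1r.
by rewrite (cnt_r WH) mulr1.
Qed.

Lemma W (V : lmodType K) (G : H -> H -> V) :
  (forall y, lin (fun x => G x y)) -> (forall x, lin (G x)) -> forall x,
  \sum_(p <- cop x) \sum_(q <- cop p.2) G p.1 (S q.1 * q.2) =
  \sum_(b <- cop 1) G (x * b.1) (S b.2).
Proof.
move=> hG1 hG2 x.
transitivity (\sum_(p <- cop x) G p.1 (es p.2)).
  by apply: eq_bigr => p _; rewrite -(As WH) (lin_sumE _ _ (hG2 _)).
by rewrite Wa // Wb.
Qed.
End WH2.


Section PAR.
Variables (K : fieldType) (H : algType K) (cop : H -> seq (H * H))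
  (eps : H -> K) (S : H -> H) (B : algType K) (pi : H -> B).
Hypothesis WH : is_weak_hopf cop eps S.
Hypothesis HP : par_rep cop S pi.
Local Notation E := (Epar cop S pi).
Local Notation act := (par_act cop S pi).

Lemma pil : lin pi. Proof. by case: HP => h _ a x y; apply: h. Qed.
Lemma pi1 : pi 1 = 1. Proof. by case: HP => _ [h _]. Qed.
Lemma R1 h k : \sum_(p <- cop k) pi h * pi p.1 * pi (S p.2) =
  \sum_(p <- cop k) pi (h * p.1) * pi (S p.2).
Proof. by case: HP => _ [_ [h1 _]]; apply: h1. Qed.
Lemma R2 h k : \sum_(p <- cop k) pi h * pi (S p.1) * pi p.2 =
  \sum_(p <- cop k) pi (h * S p.1) * pi p.2.
Proof. by case: HP => _ [_ [_ [h1 _]]]; apply: h1. Qed.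
Lemma R3 h k : \sum_(p <- cop h) pi p.1 * pi (S p.2) * pi k =
  \sum_(p <- cop h) pi p.1 * pi (S p.2 * k).
Proof. by case: HP => _ [_ [_ [_ [h1 _]]]]; apply: h1. Qed.
Lemma R4 h k : \sum_(p <- cop h) pi (S p.1) * pi p.2 * pi k =
  \sum_(p <- cop h) pi (S p.1) * pi (p.2 * k).
Proof. by case: HP => _ [_ [_ [_ [_ [h1 _]]]]]; apply: h1. Qed.
Lemma R5 h : pi h = \sum_(p <- cop h) \sum_(q <- cop p.1) pi q.1 * pi (S q.2) * pi p.2.
Proof.
case: HP => _ [_ [_ [_ [_ [_ h1]]]]]; rewrite h1 /cop2 big_flatten big_map.
by apply: eq_bigr => p _; rewrite big_map.
Qed.

Lemma ctx I (s : seq I) (f g : I -> B) c d :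
  \sum_(i <- s) f i = \sum_(i <- s) g i ->
  \sum_(i <- s) c * f i * d = \sum_(i <- s) c * g i * d.
Proof. by move=> e; rewrite -!mulr_suml -!mulr_sumr e. Qed.
Lemma sumcd I (s : seq I) (f : I -> B) c d :
  c * (\sum_(i <- s) f i) * d = \sum_(i <- s) c * f i * d.
Proof. by rewrite mulr_sumr mulr_suml. Qed.

Lemma R1c c d h k : \sum_(p <- cop k) c * (pi h * pi p.1 * pi (S p.2)) * d =
  \sum_(p <- cop k) c * (pi (h * p.1) * pi (S p.2)) * d.
Proof. exact: ctx (R1 h k). Qed.
Lemma R2c c d h k : \sum_(p <- cop k) c * (pi h * pi (S p.1) * pi p.2) * d =
  \sum_(p <- cop k) c * (pi (h * S p.1) * pi p.2) * d.
Proof. exact: ctx (R2 h k). Qed.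
Lemma R3c c d h k : \sum_(p <- cop h) c * (pi p.1 * pi (S p.2) * pi k) * d =
  \sum_(p <- cop h) c * (pi p.1 * pi (S p.2 * k)) * d.
Proof. exact: ctx (R3 h k). Qed.
Lemma R4c c d h k : \sum_(p <- cop h) c * (pi (S p.1) * pi p.2 * pi k) * d =
  \sum_(p <- cop h) c * (pi (S p.1) * pi (p.2 * k)) * d.
Proof. exact: ctx (R4 h k). Qed.

Lemma lin_piC (V : lmodType K) (f : V -> H) : lin f -> lin (fun x => pi (f x)).
Proof. move=> hf; exact: (lin_comp pil hf). Qed.
Lemma lin_actC (V : lmodType K) (f : V -> H) c : lin f -> lin (fun x => act (f x) c).
Proof.
move=> hf.
have L : lin (fun y => act y c).
  rewrite /par_act; apply: (lin_copP WH) => y /=.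
    by apply: lin_mulr; apply: lin_mulr; apply: lin_piC.
  by apply: lin_mull; apply: lin_piC; apply: (lin_SC WH).
exact: (lin_comp L hf).
Qed.
Lemma lin_act2C (V : lmodType K) (f : V -> B) h : lin f -> lin (fun x => act h (f x)).
Proof.
move=> hf; rewrite /par_act; apply: lin_sum => p.
by apply: lin_mulr; apply: lin_mull.
Qed.
Lemma lin_EC (V : lmodType K) (f : V -> H) : lin f -> lin (fun x => E (f x)).
Proof.
move=> hf.
have L : lin (fun y => E y).
  rewrite /Epar; apply: (lin_copP WH) => y /=.
    by apply: lin_mulr; apply: lin_piC.
  by apply: lin_mull; apply: lin_piC; apply: (lin_SC WH).
exact: (lin_comp L hf).
Qed.

Ltac lin1 := first
  [ apply: (lin_copP WH) | apply: lin_sum | apply: lin_add | apply: lin_mull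
  | apply: lin_mulr | apply: lin_scale | apply: (lin_SC WH)
  | apply: (lin_epsC WH) | apply: lin_piC | apply: lin_actC | apply: lin_act2C
  | apply: lin_EC | apply: lin_id
  | match goal with hh : forall _, lin (fun _ => _) |- _ => apply: (lin_app1 _ hh) end
  | match goal with hh : forall _, lin _ |- _ => apply: (lin_app2 _ hh) end ].
Ltac lint := repeat first [ match goal with |- forall _, _ => intro end | simpl; lin1 ].
Ltac side := try (solve [lint]).
Ltac eqsum := repeat (apply: eq_bigr => ? _); rewrite ?mulr1 ?mul1r ?mulrA //.

Definition alpha a := forall h, pi h * a = \sum_(p <- cop h) act p.1 a * pi p.2.

Lemma actE1 h : act h 1 = E h.
Proof. by rewrite /par_act /Epar; apply: eq_bigr => p _; rewrite mulr1. Qed.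

Lemma alpha1 : alpha 1.
Proof.
move=> h; rewrite mulr1 R5; apply: eq_bigr => p _.
by rewrite /par_act mulr_suml; apply: eq_bigr => q _; rewrite mulr1.
Qed.

Lemma act_lin h : lin (act h). Proof. by apply: lin_act2C; apply: lin_id. Qed.

Lemma alphaD a b : alpha a -> alpha b -> alpha (a + b).
Proof.
move=> ha hb h; rewrite mulrDr ha hb -big_split /=; apply: eq_bigr => p _.
by rewrite (linD (act_lin _)) mulrDl.
Qed.
Lemma alphaZ c a : alpha a -> alpha (c *: a).
Proof.
move=> ha h; rewrite -scalerAr ha scaler_sumr; apply: eq_bigr => p _.
by rewrite (linZ (act_lin _)) scalerAl.
Qed.

Lemma alphaM a b : alpha a -> alpha b -> alpha (a * b).
Proof.
move=> ha hb h.
rewrite mulrA ha mulr_suml.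
transitivity (\sum_(p <- cop h) \sum_(r <- cop p.2) \sum_(t <- cop r.1)
   (fun u1 u2 u3 u4 => act u1 a * pi u2 * b * pi (S u3) * pi u4) p.1 t.1 t.2 r.2).
  apply: eq_bigr => p _ /=; rewrite -mulrA hb mulr_sumr; apply: eq_bigr => r _.
  rewrite [act r.1 b]/par_act mulr_suml mulr_sumr; apply: eq_bigr => t _; by rewrite !mulrA.
rewrite -(coassoc WH (F:=fun u v w => \sum_(s <- cop v)
    (fun u1 u2 u3 u4 => act u1 a * pi u2 * b * pi (S u3) * pi u4) u s.1 s.2 w)); side.
transitivity (\sum_(p <- cop h) \sum_(q <- cop p.1) \sum_(s <- cop q.1)
   (fun u1 u2 u3 u4 => act u1 a * pi u2 * b * pi (S u3) * pi u4) s.1 s.2 q.2 p.2).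
  apply: eq_bigr => p _.
  by rewrite -(coassoc WH (F:=fun u v w => (fun u1 u2 u3 u4 => act u1 a * pi u2 * b * pi (S u3) * pi u4) u v w p.2)); side.
apply: eq_bigr => p _; rewrite /par_act mulr_suml; apply: eq_bigr => q _ /=.
rewrite mulrA ha !mulr_suml; apply: eq_bigr => s _; by rewrite ?mulrA.
Qed.

Lemma gam a : alpha a -> forall h b, act h (a * b) = \sum_(p <- cop h) act p.1 a * act p.2 b.
Proof.
move=> ha h b.
transitivity (\sum_(p <- cop h) \sum_(q <- cop p.1)
   (fun u v w => act u a * pi v * b * pi (S w)) q.1 q.2 p.2).
  rewrite {1}/par_act; apply: eq_bigr => p _.
  rewrite mulrA ha !mulr_suml; apply: eq_bigr => q _ /=; by rewrite ?mulrA.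
rewrite (coassoc WH (F:=fun u v w => act u a * pi v * b * pi (S w))); side.
apply: eq_bigr => p _ /=; rewrite [act p.2 b]/par_act mulr_sumr.
apply: eq_bigr => q _; by rewrite ?mulrA.
Qed.

Lemma gam_r c : alpha c -> forall h, act h c = \sum_(p <- cop h) act p.1 c * E p.2.
Proof.
move=> hc h; have := gam hc h 1; rewrite mulr1 => ->.
by apply: eq_bigr => p _; rewrite actE1.
Qed.
Lemma gam_l c h : act h c = \sum_(p <- cop h) E p.1 * act p.2 c.
Proof.
have := gam alpha1 h c; rewrite mul1r => ->.
by apply: eq_bigr => p _; rewrite actE1.
Qed.

Lemma K1aux h k : \sum_(p <- cop h) E (p.1 * k) * pi p.2 =
  \sum_(p <- cop h) act p.1 (E k) * pi p.2.
Proof.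
transitivity (\sum_(p <- cop h) \sum_(q <- cop p.1) (fun u v w =>
   \sum_(s <- cop k) pi (u * s.1) * pi (S s.2 * S v) * pi w) q.1 q.2 p.2).
  apply: eq_bigr => p _; rewrite /Epar (mulcop WH (F:=fun r => pi r.1 * pi (S r.2))); side.
  rewrite mulr_suml; apply: eq_bigr => q _; rewrite mulr_suml.
  by apply: eq_bigr => s _ /=; rewrite (AM WH).
rewrite (coassoc WH (F:=fun u v w =>
   \sum_(s <- cop k) pi (u * s.1) * pi (S s.2 * S v) * pi w)); side.
transitivity (\sum_(p <- cop h) \sum_(q <- cop p.2) \sum_(s <- cop k)
   pi (p.1 * s.1) * (pi (S s.2) * pi (S q.1) * pi q.2) * 1).
  apply: eq_bigr => p _ /=; rewrite exchange_big [RHS]exchange_big.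
  apply: eq_bigr => s _ /=.
  rewrite R2c; apply: eq_bigr => q _; by rewrite mulr1 mulrA.
transitivity (\sum_(p <- cop h) \sum_(q <- cop p.1) (fun u v w =>
   \sum_(s <- cop k) pi (u * s.1) * pi (S s.2) * pi (S v) * pi w) q.1 q.2 p.2).
  rewrite (coassoc WH (F:=fun u v w =>
   \sum_(s <- cop k) pi (u * s.1) * pi (S s.2) * pi (S v) * pi w)); side.
  eqsum.
apply: eq_bigr => p _ /=; rewrite /par_act mulr_suml; apply: eq_bigr => q _.
transitivity (\sum_(s <- cop k) 1 * (pi (q.1 * s.1) * pi (S s.2)) * (pi (S q.2) * pi p.2)).
  eqsum.
rewrite -R1c /Epar mulr_sumr !mulr_suml; eqsum.
Qed.

Lemma alphaE k : alpha (E k).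
Proof.
move=> h; rewrite -K1aux.
transitivity (\sum_(s <- cop k) pi (h * s.1) * pi (S s.2)).
  by rewrite /Epar mulr_sumr -R1; eqsum.
symmetry.
transitivity (\sum_(p <- cop h) \sum_(q <- cop p.1) (fun u v w =>
   \sum_(s <- cop k) pi (u * s.1) * pi (S s.2 * S v * w)) q.1 q.2 p.2).
  apply: eq_bigr => p _; rewrite /Epar mulr_suml R3.
  rewrite (mulcop WH (F:=fun r => pi r.1 * pi (S r.2 * p.2))); side.
  by apply: eq_bigr => q _; apply: eq_bigr => s _ /=; rewrite (AM WH).
rewrite (coassoc WH (F:=fun u v w =>
   \sum_(s <- cop k) pi (u * s.1) * pi (S s.2 * S v * w))); side.
transitivity (\sum_(p <- cop h) \sum_(q <- cop p.2) (fun u v =>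
   \sum_(s <- cop k) pi (u * s.1) * pi (S s.2 * v)) p.1 (S q.1 * q.2)).
  eqsum.
rewrite (W WH (G:=fun u v => \sum_(s <- cop k) pi (u * s.1) * pi (S s.2 * v))); side.
rewrite -(mul1cop WH (F:=fun r => pi (h * r.1) * pi (S r.2))); side.
by apply: eq_bigr => b _; apply: eq_bigr => s _ /=; rewrite (AM WH) mulrA.
Qed.

Lemma K1 h k : pi h * E k = \sum_(p <- cop h) E (p.1 * k) * pi p.2.
Proof. by rewrite alphaE K1aux. Qed.

Lemma K2 h k : E k * pi (S h) = \sum_(p <- cop h) pi (S p.1) * E (p.2 * k).
Proof.
transitivity (\sum_(s <- cop k) pi s.1 * pi (S (h * s.2))).
  rewrite /Epar mulr_suml R3; apply: eq_bigr => s _; by rewrite (AM WH).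
symmetry.
transitivity (\sum_(p <- cop h) \sum_(q <- cop p.2) (fun u v w =>
   \sum_(s <- cop k) pi (S u * (v * s.1)) * pi (S (w * s.2))) p.1 q.1 q.2).
  apply: eq_bigr => p _; rewrite /Epar mulr_sumr.
  under eq_bigr do rewrite mulrA.
  by rewrite R1 (mulcop WH (F:=fun r => pi (S p.1 * r.1) * pi (S r.2))); side.
rewrite -(coassoc WH (F:=fun u v w =>
   \sum_(s <- cop k) pi (S u * (v * s.1)) * pi (S (w * s.2)))); side.
transitivity (\sum_(p <- cop h) \sum_(q <- cop p.1) (fun u v =>
   \sum_(s <- cop k) pi (u * s.1) * pi (S (v * s.2))) (S q.1 * q.2) p.2).
  eqsum.
rewrite (W3 WH (G:=fun u v => \sum_(s <- cop k) pi (u * s.1) * pi (S (v * s.2)))); side.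
rewrite -(mul1cop WH (F:=fun r => pi r.1 * pi (S (h * r.2)))); side.
by apply: eq_bigr => b _; apply: eq_bigr => s _ /=; rewrite mulrA.
Qed.

Lemma P3one h k : act h (E k) = \sum_(p <- cop h) E p.1 * E (p.2 * k).
Proof.
transitivity (\sum_(p <- cop h) \sum_(q <- cop p.2)
   (fun u v w => pi u * pi (S v) * E (w * k)) p.1 q.1 q.2).
  rewrite /par_act; apply: eq_bigr => p _; rewrite -mulrA K2 mulr_sumr.
  by apply: eq_bigr => q _; rewrite mulrA.
rewrite -(coassoc WH (F:=fun u v w => pi u * pi (S v) * E (w * k))); side.
by apply: eq_bigr => p _; rewrite /Epar mulr_suml.
Qed.

Lemma P4one h k : act h (E k) = \sum_(p <- cop h) E (p.1 * k) * E p.2.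
Proof.
transitivity (\sum_(p <- cop h) \sum_(q <- cop p.1)
   (fun u v w => E (u * k) * pi v * pi (S w)) q.1 q.2 p.2).
  rewrite /par_act; apply: eq_bigr => p _; rewrite K1 mulr_suml.
  by apply: eq_bigr => q _.
rewrite (coassoc WH (F:=fun u v w => E (u * k) * pi v * pi (S w))); side.
apply: eq_bigr => p _; rewrite [E p.2]/Epar mulr_sumr.
by apply: eq_bigr => q _; rewrite mulrA.
Qed.

Lemma act1 a : alpha a -> act 1 a = a.
Proof.
move=> ha; rewrite (gam_r ha).
transitivity (\sum_(p <- cop 1) \sum_(q <- cop p.1) (fun u v w => \sum_(t <- cop w)
   pi u * a * pi (S v) * pi t.1 * pi (S t.2)) q.1 q.2 p.2).
  apply: eq_bigr => p _; rewrite /par_act /Epar mulr_suml; apply: eq_bigr => q _ /=.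
  rewrite mulr_sumr; eqsum.
rewrite (coassoc WH (F:=fun u v w => \sum_(t <- cop w)
   pi u * a * pi (S v) * pi t.1 * pi (S t.2))); side.
transitivity (\sum_(p <- cop 1) \sum_(q <- cop p.2) \sum_(t <- cop q.1)
   (pi p.1 * a) * (pi (S t.1) * pi t.2 * pi (S q.2)) * 1).
  apply: eq_bigr => p _ /=.
  rewrite -(coassoc WH (F:=fun u v w => pi p.1 * a * pi (S u) * pi v * pi (S w))); side.
  eqsum.
transitivity (\sum_(p <- cop 1) \sum_(q <- cop p.2) \sum_(t <- cop q.1)
   (pi p.1 * a) * (pi (S t.1) * pi (t.2 * S q.2)) * 1).
  by apply: eq_bigr => p _; apply: eq_bigr => q _; rewrite R4c.
transitivity (\sum_(p <- cop 1) \sum_(b <- cop 1)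
   (fun u v w => pi u * a * pi (S v) * pi w) p.1 (b.1 * p.2) b.2).
  apply: eq_bigr => p _.
  transitivity (\sum_(q <- cop p.2) \sum_(t <- cop q.2)
     (fun u v => pi p.1 * a * pi (S u) * pi v) q.1 (t.1 * S t.2)).
    rewrite (coassoc WH (F:=fun u v w => (pi p.1 * a) * (pi (S u) * pi (v * S w)) * 1)); side.
    eqsum.
  by rewrite (Wp WH (G:=fun u v => pi p.1 * a * pi (S u) * pi v)); side.
rewrite exchange_big /=.
rewrite (D1a WH (F:=fun u v w => pi u * a * pi (S v) * pi w)); side.
transitivity (\sum_(p <- cop 1) act p.1 a * pi p.2).
  by apply: eq_bigr => p _; rewrite /par_act mulr_suml.
by rewrite -ha pi1 mul1r.
Qed.

Local Notation inA := (in_gen_subalg (Epar cop S pi)).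

Lemma inA_ind (P : B -> Prop) : is_subalg_pred P -> (forall h, P (E h)) ->
  forall a, inA a -> P a.
Proof. by move=> hP hE a ha; apply: ha. Qed.
Lemma inA1 : inA 1. Proof. by move=> P [h _] _. Qed.
Lemma inAD x y : inA x -> inA y -> inA (x + y).
Proof. move=> hx hy P hP hE; case: (hP) => _ [h _]; apply: h; [apply: hx|apply: hy] => //. Qed.
Lemma inAZ c x : inA x -> inA (c *: x).
Proof. move=> hx P hP hE; case: (hP) => _ [_ [h _]]; apply: h; apply: hx => //. Qed.
Lemma inAM x y : inA x -> inA y -> inA (x * y).
Proof. move=> hx hy P hP hE; case: (hP) => _ [_ [_ h]]; apply: h; [apply: hx|apply: hy] => //. Qed.
Lemma inAE h : inA (E h). Proof. by move=> P _ hE. Qed.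
Lemma inA0 : inA 0. Proof. by rewrite -(scale0r 1); apply: inAZ; apply: inA1. Qed.
Lemma inA_sum I (s : seq I) (F : I -> B) : (forall i, inA (F i)) -> inA (\sum_(i <- s) F i).
Proof. move=> hF; apply: big_ind => //; [exact: inA0 | exact: inAD]. Qed.

Lemma alpha_inA a : inA a -> alpha a.
Proof.
apply: inA_ind; last exact: alphaE.
split; [exact: alpha1|split; [exact: alphaD|split; [|exact: alphaM]]].
by move=> c x; apply: alphaZ.
Qed.

Lemma clos a : inA a -> forall h, inA (act h a).
Proof.
move=> ha; suff : inA a /\ forall h, inA (act h a) by case.
move: a ha; apply: inA_ind.
  split; [split; [exact: inA1|] => h; rewrite actE1; exact: inAE|].
  split; [move=> x y [hx1 hx2] [hy1 hy2]; split; [exact: inAD|] => h|].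
    by rewrite (linD (act_lin h)); apply: inAD.
  split; [move=> c x [hx1 hx2]; split; [exact: inAZ|] => h|].
    by rewrite (linZ (act_lin h)); apply: inAZ.
  move=> x y [hx1 hx2] [hy1 hy2]; split; [exact: inAM|] => h.
  rewrite (gam (alpha_inA hx1)); apply: inA_sum => p; exact: inAM.
move=> k; split; [exact: inAE|] => h.
rewrite P3one; apply: inA_sum => p; apply: inAM; exact: inAE.
Qed.

Definition P3 c := forall h k, act h (act k c) = \sum_(p <- cop h) E p.1 * act (p.2 * k) c.
Definition P4 c := forall h k, act h (act k c) = \sum_(p <- cop h) act (p.1 * k) c * E p.2.

Lemma split_prod a b h k : inA a ->
  act h (act k (a * b)) =
  \sum_(q <- cop k) \sum_(p <- cop h) act p.1 (act q.1 a) * act p.2 (act q.2 b).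
Proof.
move=> ia.
rewrite (gam (alpha_inA ia)) (lin_sumE _ _ (act_lin h)); apply: eq_bigr => q _.
by rewrite (gam (alpha_inA (clos ia q.1))).
Qed.

Lemma P3M a b : inA a -> inA b -> P3 a -> P3 b -> P3 (a * b).
Proof.
move=> ia ib h3a h3b h k; rewrite split_prod //.
transitivity (\sum_(q <- cop k) \sum_(p <- cop h) \sum_(t <- cop p.2)
  (fun u v w => act u (act q.1 a) * E v * act (w * q.2) b) p.1 t.1 t.2).
  apply: eq_bigr => q _; apply: eq_bigr => p _ /=; rewrite h3b mulr_sumr; eqsum.
transitivity (\sum_(q <- cop k) \sum_(p <- cop h) act p.1 (act q.1 a) * act (p.2 * q.2) b).
  apply: eq_bigr => q _.
  rewrite -(coassoc WH (F:=fun u v w => act u (act q.1 a) * E v * act (w * q.2) b)); side.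
  apply: eq_bigr => p _ /=.
  by rewrite (gam_r (alpha_inA (clos ia q.1)) p.1) mulr_suml.
transitivity (\sum_(q <- cop k) \sum_(p <- cop h) \sum_(r <- cop p.1)
  (fun u v w => E u * act (v * q.1) a * act (w * q.2) b) r.1 r.2 p.2).
  apply: eq_bigr => q _; apply: eq_bigr => p _ /=.
  by rewrite h3a mulr_suml.
transitivity (\sum_(q <- cop k) \sum_(p <- cop h) \sum_(r <- cop p.2)
  E p.1 * act (r.1 * q.1) a * act (r.2 * q.2) b).
  apply: eq_bigr => q _.
  by rewrite (coassoc WH (F:=fun u v w => E u * act (v * q.1) a * act (w * q.2) b)); side.
rewrite exchange_big; apply: eq_bigr => p _ /=.
rewrite (gam (alpha_inA ia)).
rewrite (mulcop WH (F:=fun u => act u.1 a * act u.2 b)); side.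
rewrite mulr_sumr exchange_big; apply: eq_bigr => r _ /=.
by rewrite mulr_sumr; eqsum.
Qed.

Lemma P4M a b : inA a -> inA b -> P4 a -> P4 b -> P4 (a * b).
Proof.
move=> ia ib h4a h4b h k; rewrite split_prod //.
transitivity (\sum_(q <- cop k) \sum_(p <- cop h) \sum_(r <- cop p.1)
  (fun u v w => act (u * q.1) a * E v * act w (act q.2 b)) r.1 r.2 p.2).
  apply: eq_bigr => q _; apply: eq_bigr => p _ /=; by rewrite h4a mulr_suml.
transitivity (\sum_(q <- cop k) \sum_(p <- cop h) act (p.1 * q.1) a * act p.2 (act q.2 b)).
  apply: eq_bigr => q _.
  rewrite (coassoc WH (F:=fun u v w => act (u * q.1) a * E v * act w (act q.2 b))); side.
  apply: eq_bigr => p _ /=.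
  by rewrite [act p.2 (act q.2 b)]gam_l mulr_sumr; eqsum.
transitivity (\sum_(q <- cop k) \sum_(p <- cop h) \sum_(r <- cop p.2)
  (fun u v w => act (u * q.1) a * act (v * q.2) b * E w) p.1 r.1 r.2).
  apply: eq_bigr => q _; apply: eq_bigr => p _ /=.
  by rewrite h4b mulr_sumr; eqsum.
transitivity (\sum_(q <- cop k) \sum_(p <- cop h) \sum_(r <- cop p.1)
  act (r.1 * q.1) a * act (r.2 * q.2) b * E p.2).
  apply: eq_bigr => q _.
  by rewrite -(coassoc WH (F:=fun u v w => act (u * q.1) a * act (v * q.2) b * E w)); side.
rewrite exchange_big; apply: eq_bigr => p _ /=.
rewrite (gam (alpha_inA ia)).
rewrite (mulcop WH (F:=fun u => act u.1 a * act u.2 b)); side.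
rewrite mulr_suml exchange_big; apply: eq_bigr => r _ /=.
by rewrite mulr_suml.
Qed.

Lemma split_act c l h k : inA c -> P4 c ->
  act h (act k (act l c)) =
  \sum_(q <- cop k) \sum_(p <- cop h) act p.1 (act (q.1 * l) c) * act p.2 (E q.2).
Proof.
move=> ic h4c; rewrite h4c (lin_sumE _ _ (act_lin h)); apply: eq_bigr => q _.
by rewrite (gam (alpha_inA (clos ic _))).
Qed.

Lemma P3act c : inA c -> P3 c -> P4 c -> forall l, P3 (act l c).
Proof.
move=> ic h3c h4c l h k; rewrite split_act //.
transitivity (\sum_(q <- cop k) \sum_(p <- cop h) \sum_(t <- cop p.2)
  (fun u v w => act u (act (q.1 * l) c) * E v * E (w * q.2)) p.1 t.1 t.2).
  apply: eq_bigr => q _; apply: eq_bigr => p _ /=; rewrite P3one mulr_sumr; eqsum.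
transitivity (\sum_(q <- cop k) \sum_(p <- cop h) act p.1 (act (q.1 * l) c) * E (p.2 * q.2)).
  apply: eq_bigr => q _.
  rewrite -(coassoc WH (F:=fun u v w => act u (act (q.1 * l) c) * E v * E (w * q.2))); side.
  apply: eq_bigr => p _ /=.
  by rewrite (gam_r (alpha_inA (clos ic _)) p.1) mulr_suml.
transitivity (\sum_(q <- cop k) \sum_(p <- cop h) \sum_(r <- cop p.1)
  (fun u v w => E u * act (v * (q.1 * l)) c * E (w * q.2)) r.1 r.2 p.2).
  apply: eq_bigr => q _; apply: eq_bigr => p _ /=.
  by rewrite h3c mulr_suml.
transitivity (\sum_(q <- cop k) \sum_(p <- cop h) \sum_(r <- cop p.2)
  E p.1 * act (r.1 * (q.1 * l)) c * E (r.2 * q.2)).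
  apply: eq_bigr => q _.
  by rewrite (coassoc WH (F:=fun u v w => E u * act (v * (q.1 * l)) c * E (w * q.2))); side.
rewrite exchange_big; apply: eq_bigr => p _ /=.
rewrite h4c.
rewrite (mulcop WH (F:=fun u => act (u.1 * l) c * E u.2)); side.
rewrite mulr_sumr exchange_big; apply: eq_bigr => r _ /=.
by rewrite mulr_sumr; eqsum.
Qed.

Lemma P4act c : inA c -> P4 c -> forall l, P4 (act l c).
Proof.
move=> ic h4c l h k; rewrite split_act //.
transitivity (\sum_(q <- cop k) \sum_(p <- cop h) \sum_(r <- cop p.1)
  (fun u v w => act (u * (q.1 * l)) c * E v * act w (E q.2)) r.1 r.2 p.2).
  apply: eq_bigr => q _; apply: eq_bigr => p _ /=; by rewrite h4c mulr_suml.
transitivity (\sum_(q <- cop k) \sum_(p <- cop h) act (p.1 * (q.1 * l)) c * act p.2 (E q.2)).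
  apply: eq_bigr => q _.
  rewrite (coassoc WH (F:=fun u v w => act (u * (q.1 * l)) c * E v * act w (E q.2))); side.
  apply: eq_bigr => p _ /=.
  by rewrite [act p.2 (E q.2)]gam_l mulr_sumr; eqsum.
transitivity (\sum_(q <- cop k) \sum_(p <- cop h) \sum_(r <- cop p.2)
  (fun u v w => act (u * (q.1 * l)) c * E (v * q.2) * E w) p.1 r.1 r.2).
  apply: eq_bigr => q _; apply: eq_bigr => p _ /=.
  by rewrite P4one mulr_sumr; eqsum.
transitivity (\sum_(q <- cop k) \sum_(p <- cop h) \sum_(r <- cop p.1)
  act (r.1 * (q.1 * l)) c * E (r.2 * q.2) * E p.2).
  apply: eq_bigr => q _.
  by rewrite -(coassoc WH (F:=fun u v w => act (u * (q.1 * l)) c * E (v * q.2) * E w)); side.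
rewrite exchange_big; apply: eq_bigr => p _ /=.
rewrite h4c.
rewrite (mulcop WH (F:=fun u => act (u.1 * l) c * E u.2)); side.
rewrite mulr_suml exchange_big; apply: eq_bigr => r _ /=.
by rewrite mulr_suml; eqsum.
Qed.

Lemma P3one' : P3 1.
Proof. move=> h k; rewrite actE1 P3one; apply: eq_bigr => p _; by rewrite actE1. Qed.
Lemma P4one' : P4 1.
Proof. move=> h k; rewrite actE1 P4one; apply: eq_bigr => p _; by rewrite actE1. Qed.

Lemma Q_inA c : inA c -> P3 c /\ P4 c.
Proof.
move=> ic; suff : inA c /\ P3 c /\ P4 c by case.
move: c ic; apply: inA_ind.
  split; [split; [exact: inA1|split; [exact: P3one'|exact: P4one']]|].
  split; [move=> x y [ix [h3x h4x]] [iy [h3y h4y]]; split; [exact: inAD|split] => h k|].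
      rewrite !(linD (act_lin _)) h3x h3y -big_split /=; apply: eq_bigr => p _.
      by rewrite (linD (act_lin _)) mulrDr.
    rewrite !(linD (act_lin _)) h4x h4y -big_split /=; apply: eq_bigr => p _.
    by rewrite (linD (act_lin _)) mulrDl.
  split; [move=> a x [ix [h3x h4x]]; split; [exact: inAZ|split] => h k|].
      rewrite !(linZ (act_lin _)) h3x scaler_sumr; apply: eq_bigr => p _.
      by rewrite (linZ (act_lin _)) scalerAr.
    rewrite !(linZ (act_lin _)) h4x scaler_sumr; apply: eq_bigr => p _.
    by rewrite (linZ (act_lin _)) scalerAl.
  move=> x y [ix [h3x h4x]] [iy [h3y h4y]]; split; [exact: inAM|split].
    exact: P3M.
  exact: P4M.
move=> l; rewrite -actE1; split; [exact: clos inA1 l|split].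
  exact: P3act inA1 P3one' P4one' l.
exact: P4act inA1 P4one' l.
Qed.
End PAR.


Unset Implicit Arguments.

Theorem proposition4p6 (K : fieldType) (H : algType K)
    (cop : H -> seq (H * H)) (eps : H -> K) (S : H -> H)
    (B : algType K) (pi : H -> B) :
  is_weak_hopf cop eps S ->
  is_Hpar cop S pi ->
  let inA := in_gen_subalg (Epar cop S pi) in
  let act := par_act cop S pi in
  (* the map h (x) a |-> h . a is well defined: linear in h and a,
     with values in A *)
  (forall c h k a, inA a -> act (c *: h + k) a = c *: act h a + act k a) /\
  (forall h c a b, inA a -> inA b -> act h (c *: a + b) = c *: act h a + act h b) /\
  (forall h a, inA a -> inA (act h a)) /\
  sym_partial_module_subalg cop inA act.
Proof.
move=> WH [HP _]; cbv zeta.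
split.
  move=> c h k a _.
  have L : lin (fun x => par_act cop S pi x a).
    exact: (lin_actC WH HP (f := fun x => x) a (@lin_id _ _)).
  exact: L.
split.
  by move=> h c a b _ _; exact: (act_lin cop S pi h c a b).
split.
  by move=> h a ia; apply: (clos WH HP ia).
split.
  by move=> h a b ia ib; apply: (gam WH HP (alpha_inA WH HP ia)).
split.
  by move=> a ia; apply: (act1 WH HP (alpha_inA WH HP ia)).
split.
  move=> h k a ia; have [h3 _] := Q_inA WH HP ia.
  by rewrite h3; apply: eq_bigr => p _; rewrite actE1.
move=> h k a ia; have [_ h4] := Q_inA WH HP ia.
by rewrite h4; apply: eq_bigr => p _; rewrite actE1.
Qed.
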